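(* Let $G$ be the $2\times n$ square lattice graph $P_2\times P_n$ with $n>2$. Then $T_1(G)=3$.
   Context: $P_2\times P_n$ is the Cartesian product of paths on $2$ and $n$ vertices. Fix a set $\Sigma$ of symbols (bond-edge types) and a disjoint copy $\hat\Sigma=\{\hat a:a\in\Sigma\}$ with $\hat{\hat a}=a$; elements of $\Sigma\cup\hat\Sigma$ are cohesive-end types. A tile is a finite multiset of cohesive-end types. A pot is a finite set $P$ of tiles such that whenever $x$ occurs in a tile of $P$, $\hat x$ occurs in some tile of $P$; $\#P$ is its number of tiles. Graphs are finite, loops and multiple edges allowed. An assembly design of a graph $H$ labels the half-edges of $H$ by cohesive-end types so that the two half-edges of each edge receive complementary labels $x,\hat x$; $t_v$ is the multiset of labels at $v$, $P_\lambda(H)=\{t_v\}$, and $P$ realizes $H$ ($H\in\mathcal{O}(P)$) if some assembly design $\lambda$ has $P_\lambda(H)\subseteq P$. $T_1(G)=\min\{\#P: G\in\mathcal{O}(P)\}$. *)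

(* Defs.v *)
From HB Require Import structures.
From mathcomp Require Import all_boot.
From mathcomp Require Import finmap multiset.

Set Implicit Arguments.
Unset Strict Implicit.
Unset Printing Implicit Defensive.

Local Open Scope fset_scope.

(* Bond-edge types: Sigma := nat (an unbounded supply of symbols).
   A cohesive-end type is a pair (a, h): h = false means a in Sigma,
   h = true means the hatted copy \hat a. *)
Definition cet := (nat * bool)%type.

Definition compl (x : cet) : cet := (x.1, ~~ x.2).

Definition tile := {mset cet}%mset.

Definition is_pot (P : {fset tile}) : Prop :=
  forall t : tile, t \in P -> forall x : cet, x \in t ->
    exists2 t' : tile, t' \in P & compl x \in t'.

Definition pot_size (P : {fset tile}) : nat := #|` P|.

(* A finite graph with loops and multiple edges allowed: a finite vertex
   type V, a finite edge type E, and for every edge its two endpoints. *)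
Record graph := Graph {
  gV : finType;
  gE : finType;
  gends : gE -> gV * gV
}.

Definition half_end (G : graph) (h : gE G * bool) : gV G :=
  if h.2 then (gends h.1).2 else (gends h.1).1.

Definition assembly_design (G : graph) (lam : gE G -> bool -> cet) : Prop :=
  forall e : gE G, lam e true = compl (lam e false).

Definition tile_at (G : graph) (lam : gE G -> bool -> cet) (v : gV G) : tile :=
  seq_mset [seq lam h.1 h.2 | h <- enum [pred h : gE G * bool | half_end h == v]].

Definition realizes (P : {fset tile}) (G : graph) : Prop :=
  exists lam : gE G -> bool -> cet,
    assembly_design lam /\ forall v : gV G, tile_at lam v \in P.

Definition T1_eq (G : graph) (k : nat) : Prop :=
  (exists2 P : {fset tile}, is_pot P /\ realizes P G & pot_size P = k) /\
  (forall P : {fset tile}, is_pot P -> realizes P G -> k <= pot_size P).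

Definition grid_adj (n : nat) (u v : 'I_2 * 'I_n) : bool :=
  ((u.1 == v.1) && ((u.2.+1 == v.2 :> nat) || (v.2.+1 == u.2 :> nat)))
  || ((u.2 == v.2) && (u.1 != v.1)).

(* Each undirected edge once: store the ordered pair (u,v) with u before v. *)
Definition grid_edge_pred (n : nat) : pred (('I_2 * 'I_n) * ('I_2 * 'I_n)) :=
  fun p => grid_adj p.1 p.2 && (enum_rank p.1 < enum_rank p.2)%N.

Definition grid_edge (n : nat) := {p : ('I_2 * 'I_n) * ('I_2 * 'I_n) | @grid_edge_pred n p}.

Definition ladder (n : nat) : graph :=
  @Graph ('I_2 * 'I_n)%type (grid_edge n : finType) (fun e => val e).

(* Main.v *)
Require Import Defs.
From mathcomp Require Import all_boot zify.
From mathcomp Require Import finmap multiset.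
Set Implicit Arguments. Unset Strict Implicit. Unset Printing Implicit Defensive.

Definition flip2 (i : 'I_2) : 'I_2 := inord (1 - i).
Definition nb m (v : 'I_2 * 'I_m.+1) : seq ('I_2 * 'I_m.+1) :=
  (flip2 v.1, v.2) :: (if 0 < v.2 then [:: (v.1, inord v.2.-1)] else [::])
     ++ (if v.2 < m then [:: (v.1, inord v.2.+1)] else [::]).

Lemma val_flip2 (i : 'I_2) : nat_of_ord (flip2 i) = 1 - i.
Proof. rewrite /flip2 /= inordK //; lia. Qed.

Lemma nbE m (v w : 'I_2 * 'I_m.+1) : grid_adj v w = (w \in nb v).
Proof.
case: v => [i j]; case: w => [i' j'].
rewrite /grid_adj /nb /=.
have Hi := ltn_ord i; have Hi2 := ltn_ord i'; have Hj := ltn_ord j; have Hj2 := ltn_ord j'.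
case: ifP => H1; case: ifP => H2; rewrite /= !inE !xpair_eqE -!val_eqE /= ?val_flip2 ?inordK ?orbF /=; try lia.
all: apply/idP/idP. all: lia.
Qed.

Lemma nb_uniq m (v : 'I_2 * 'I_m.+1) : uniq (nb v).
Proof.
case: v => [i j]; rewrite /nb /=.
have Hi := ltn_ord i; have Hj := ltn_ord j.
case: ifP => H1; case: ifP => H2; rewrite /= ?inE ?xpair_eqE -?val_eqE /= ?inordK ?val_flip2 ?andbT; lia.
Qed.

Definition HE n := (gE (ladder n) * bool)%type.
Definition other n (h : HE n) : 'I_2 * 'I_n := if h.2 then (val h.1).1 else (val h.1).2.
Definition hflip n (h : HE n) : HE n := (h.1, ~~ h.2).

Lemma adj_sym n (u v : 'I_2 * 'I_n) : grid_adj u v = grid_adj v u.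
Proof. rewrite /grid_adj (eq_sym v.1) (eq_sym v.2) (orbC (v.2.+1 == _)). by []. Qed.
Lemma adj_irr n (v : 'I_2 * 'I_n) : ~~ grid_adj v v.
Proof. rewrite /grid_adj !eqxx /= orbF orbb. apply/negP => /eqP. lia. Qed.

Lemma half_end_flip n (h : HE n) : half_end (hflip h) = other h.
Proof. by case: h => e []. Qed.

Lemma other_adj n (h : HE n) v : half_end h = v -> grid_adj v (other h).
Proof.
case: h => [[[p1 p2] Hp] b]; rewrite /half_end /other /=.
move: Hp; rewrite /grid_edge_pred /= => /andP [Ha _].
by case: b => /= <- //; rewrite adj_sym.
Qed.

Lemma other_inj n v : {in [pred h : HE n | half_end h == v] &, injective (@other n)}.
Proof.
move=> [[[p1 p2] Hp] b] [[[q1 q2] Hq] b']; rewrite !inE /half_end /other /=.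
have /andP [_ Rp] := Hp; have /andP [_ Rq] := Hq; simpl in Rp, Rq.
case: b; case: b' => /= /eqP E1 /eqP E2 E3; subst.
- by congr (_, _); apply: val_inj.
- lia.
- lia.
- by congr (_, _); apply: val_inj.
Qed.

Lemma other_surj n (v w : 'I_2 * 'I_n) : grid_adj v w ->
  exists2 h : HE n, half_end h == v & other h = w.
Proof.
move=> Hvw.
case: (ltngtP (enum_rank v) (enum_rank w)) => H.
- have pf : grid_edge_pred (v, w) by rewrite /grid_edge_pred /= Hvw H.
  by exists (exist _ (v, w) pf, false).
- have pf : grid_edge_pred (w, v) by rewrite /grid_edge_pred /= adj_sym Hvw H.
  by exists (exist _ (w, v) pf, true).
- have E := enum_rank_inj (ord_inj H). by subst; rewrite (negbTE (adj_irr _)) in Hvw.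
Qed.

Lemma perm_other n v :
  perm_eq [seq @other n h | h <- enum [pred h : HE n | half_end h == v]] (enum (grid_adj v)).
Proof.
apply: uniq_perm.
- rewrite map_inj_in_uniq ?enum_uniq //; move=> x y; rewrite !mem_enum; exact: other_inj.
- exact: enum_uniq.
- move=> w; rewrite mem_enum; apply/mapP/idP.
  + by move=> [h Hh ->]; rewrite mem_enum inE in Hh; exact: other_adj (eqP Hh).
  + move=> Hw; have [h Hh <-] := other_surj Hw; exists h => //; by rewrite mem_enum inE.
Qed.

Lemma tile_def n (lam : gE (ladder n) -> bool -> cet) v :
  tile_at lam v = seq_mset [seq lam h.1 h.2 | h <- enum [pred h : HE n | half_end h == v]].
Proof. by []. Qed.

Lemma size_tile n (lam : gE (ladder n) -> bool -> cet) v :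
  size (enum_mset (tile_at lam v)) = #|grid_adj v|.
Proof.
rewrite tile_def (perm_size (perm_eq_seq_mset _)) size_map -(size_map (@other n)).
by rewrite (perm_size (perm_other _)) cardE.
Qed.

Lemma mem_tile n (lam : gE (ladder n) -> bool -> cet) (v : 'I_2 * 'I_n) (h : HE n) :
  half_end h = v -> lam h.1 h.2 \in enum_mset (tile_at lam v).
Proof.
move=> Hh; rewrite tile_def (perm_mem (perm_eq_seq_mset _)).
by apply/mapP; exists h => //; rewrite mem_enum inE Hh.
Qed.

Lemma card_nb m (v : 'I_2 * 'I_m.+1) : #|grid_adj v| = size (nb v).
Proof.
rewrite -(card_uniqP (nb_uniq v)); apply: eq_card => w.
by rewrite -nbE.
Qed.

Lemma size_nb m (v : 'I_2 * 'I_m.+1) : size (nb v) = 1 + (0 < v.2) + (v.2 < m).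
Proof. by rewrite /nb; case: ifP; case: ifP. Qed.

Lemma sum_count n (lam : gE (ladder n) -> bool -> cet) (q : pred cet) :
  \sum_(v : 'I_2 * 'I_n) count q (enum_mset (tile_at lam v)) = \sum_(h : HE n) q (lam h.1 h.2).
Proof.
rewrite (partition_big (fun h : HE n => half_end h) predT) //=.
apply: eq_bigr => v _.
rewrite tile_def (permP (perm_eq_seq_mset _)) count_map -sumn_count sumn_map.
rewrite big_enum_cond /=. apply: eq_bigl => h. by rewrite inE andbT.
Qed.

Lemma lam_flip n (lam : gE (ladder n) -> bool -> cet) (h : HE n) :
  assembly_design lam -> lam (hflip h).1 (hflip h).2 = compl (lam h.1 h.2).
Proof.
move=> Had; case: h => e [] /=; rewrite Had //.
by rewrite /compl /= negbK; case: (lam e false).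
Qed.

Lemma hflip_inj n : injective (@hflip n).
Proof. by move=> [e b] [e' b'] [-> /negb_inj ->]. Qed.

Lemma sum_balance n (lam : gE (ladder n) -> bool -> cet) :
  assembly_design lam ->
  \sum_(v : 'I_2 * 'I_n) count (fun x : cet => ~~ x.2) (enum_mset (tile_at lam v)) =
  \sum_(v : 'I_2 * 'I_n) count (fun x : cet => x.2) (enum_mset (tile_at lam v)).
Proof.
move=> Had; rewrite !sum_count (reindex_inj (@hflip_inj n)) /=.
by apply: eq_bigr => h _; have := lam_flip h Had; rewrite /hflip /= => ->; rewrite /compl /= negbK.
Qed.

Lemma two_compl (s : seq cet) x : size s = 2 -> x \in s -> compl x \in s ->
  count (fun y : cet => ~~ y.2) s = count (fun y : cet => y.2) s.
Proof.
case: s => [|y [|z [|]]] //= _.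
rewrite !inE /compl; case: x => x1 x2; case: y => y1 y2; case: z => z1 z2.
rewrite !xpair_eqE /=.
by case: x2; case: y2; case: z2; rewrite ?andbF ?andbT ?orbF /=.
Qed.

Lemma lower m (lam : gE (ladder m.+3) -> bool -> cet) (P : {fset tile}) :
  assembly_design lam -> (forall v, tile_at lam v \in P) -> 3 <= #|` P|.
Proof.
move=> Had HP.
rewrite leqNgt; apply/negP => Hlt.
pose v00 : 'I_2 * 'I_m.+3 := (ord0, ord0).
pose v10 : 'I_2 * 'I_m.+3 := (ord_max, ord0).
pose v01 : 'I_2 * 'I_m.+3 := (ord0, inord 1).
pose T v := tile_at lam v.
have sz v : size (enum_mset (T v)) = 1 + (0 < v.2) + (v.2 < m.+2).
  by rewrite /T size_tile card_nb size_nb.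
have s00 : size (enum_mset (T v00)) = 2 by rewrite sz.
have s10 : size (enum_mset (T v10)) = 2 by rewrite sz.
have s01 : size (enum_mset (T v01)) = 3 by rewrite sz /= inordK.
have three a b c : a \in P -> b \in P -> c \in P -> a != b -> a != c -> b != c -> False.
  move=> Ha Hb Hc ab ac bc.
  have : ((a |` (b |` [fset c])) `<=` P)%fset.
    apply/fsubsetP => x; rewrite !inE => /orP [/eqP -> // | /orP [/eqP -> // | /eqP -> //]].
  move/fsubset_leq_card; rewrite !cardfsU1 cardfs1 !inE negb_or ab ac bc /=.
  by move=> H; have := leq_ltn_trans H Hlt.
have neq t1 t2 : size (enum_mset t1) != size (enum_mset t2) -> t1 != t2.
  by apply: contra => /eqP ->.
have Hall v : T v = T v00 \/ T v = T v01.
  case: (eqVneq (T v) (T v00)) => [E|H1]; first by left; exact: E.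
  case: (eqVneq (T v) (T v01)) => [E|H2]; first by right; exact: E.
  exfalso. have := three (T v00) (T v01) (T v) (HP _) (HP _) (HP _).
  have n01 : T v00 != T v01 by apply: neq; rewrite s00 s01.
  move=> /(_ n01). rewrite eq_sym in H1. rewrite eq_sym in H2. move=> /(_ H1 H2). exact.
have E10 : T v10 = T v00.
  case: (Hall v10) => E; [exact: E | by move: s10; rewrite E s01].
have Hadj : grid_adj v00 v10 by [].
have [h Hh Hoh] := other_surj Hadj.
have Hx := mem_tile lam (eqP Hh).
have Hy : lam (hflip h).1 (hflip h).2 \in enum_mset (T v00).
  by rewrite -E10; apply: mem_tile; rewrite half_end_flip.
rewrite lam_flip // in Hy.
have Ca := two_compl s00 Hx Hy.
have Cb : count (fun y : cet => ~~ y.2) (enum_mset (T v01)) + count (fun y : cet => y.2) (enum_mset (T v01)) = 3.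
  by rewrite -s01 addnC -(count_predC (fun y : cet => y.2)).
have Hb := sum_balance Had.
rewrite (bigD1 v01) // [in RHS](bigD1 v01) //= in Hb.
have Hrest : forall (r : rel nat), (forall x y, r x y -> r x x -> x <= y) -> True by [].
case: (ltngtP (count (fun y : cet => ~~ y.2) (enum_mset (T v01))) (count (fun y : cet => y.2) (enum_mset (T v01)))) => C.
- have : \sum_(i | i != v01) count (fun x : cet => ~~ x.2) (enum_mset (tile_at lam i)) <=
         \sum_(i | i != v01) count (fun x : cet => x.2) (enum_mset (tile_at lam i)).
    apply: leq_sum => v _; case: (Hall v) => E; rewrite /T in E; rewrite E.
    + by rewrite Ca.
    + exact: ltnW.
  rewrite /T in C; move=> H; have := leq_add C H; by rewrite addSn -Hb ltnn.
- have : \sum_(i | i != v01) count (fun x : cet => x.2) (enum_mset (tile_at lam i)) <=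
         \sum_(i | i != v01) count (fun x : cet => ~~ x.2) (enum_mset (tile_at lam i)).
    apply: leq_sum => v _; case: (Hall v) => E; rewrite /T in E; rewrite E.
    + by rewrite Ca.
    + exact: (ltnW C).
  rewrite /T in C; move=> H; have := leq_add C H; by rewrite addSn Hb ltnn.
- rewrite /T in C Cb; lia.
Qed.

Definition Llab n (v w : 'I_2 * 'I_n) : cet :=
  if v.1 == w.1 then (0, ((v.1 : nat) == 1) (+) (w.2 < v.2))
  else (if (v.2 == 0 :> nat) || (v.2 == n.-1 :> nat) then 0 else 1,
        if v.2 == 0 :> nat then (v.1 : nat) == 0 else (v.1 : nat) == 1).

Lemma L_anti n (v w : 'I_2 * 'I_n) : grid_adj v w -> Llab w v = compl (Llab v w).
Proof.
case: v => [[[|[|i]] Hi] [j Hj]] //; case: w => [[[|[|i']] Hi'] [j' Hj']] //;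
rewrite /grid_adj /Llab /compl -!val_eqE /= => H.
- have -> : (j' < j) = ~~ (j < j') by lia. by rewrite negbK.
- have -> : j' = j by lia. by case: (j == 0).
- have -> : j' = j by lia. by case: (j == 0).
- have -> : (j' < j) = ~~ (j < j') by lia. by case: (j < j').
Qed.

Definition lamL n (e : gE (ladder n)) (b : bool) : cet :=
  if b then Llab (val e).2 (val e).1 else Llab (val e).1 (val e).2.

Lemma lamL_ad n : assembly_design (@lamL n).
Proof.
move=> e; rewrite /lamL; apply: L_anti.
by case: e => [[p1 p2] /= /andP []].
Qed.

Lemma tile_L m (v : 'I_2 * 'I_m.+1) :
  tile_at (@lamL m.+1) v = seq_mset [seq Llab v w | w <- nb v].
Proof.
rewrite tile_def; apply/eq_seq_msetP.
have -> : [seq lamL h.1 h.2 | h <- enum [pred h : HE m.+1 | half_end h == v]] =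
          [seq Llab v w | w <- [seq other h | h <- enum [pred h : HE m.+1 | half_end h == v]]].
  rewrite -map_comp; apply/eq_in_map => h; rewrite mem_enum inE => /eqP.
  by case: h => e [] /= <-.
apply: perm_map; apply: (perm_trans (perm_other _)).
apply: uniq_perm; [exact: enum_uniq | exact: nb_uniq | ].
by move=> w; rewrite mem_enum -nbE.
Qed.

Definition tA : seq cet := [:: (0, false); (0, true)].
Definition tB : seq cet := [:: (0, false); (0, true); (1, false)].
Definition tC : seq cet := [:: (0, false); (0, true); (1, true)].

Lemma Llab_vert n (i : 'I_2) (j : 'I_n) :
  Llab (i, j) (flip2 i, j) = (if (j == 0 :> nat) || (j == n.-1 :> nat) then 0 else 1,
                             if j == 0 :> nat then (i : nat) == 0 else (i : nat) == 1).
Proof.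
rewrite /Llab /= -val_eqE /= val_flip2.
have Hi := ltn_ord i. by have -> : ((i : nat) == 1 - i) = false by lia.
Qed.

Lemma Llab_hor n (i : 'I_2) (j j' : 'I_n) :
  Llab (i, j) (i, j') = (0, ((i : nat) == 1) (+) (j' < j)).
Proof. by rewrite /Llab /= eqxx. Qed.

Lemma tile_in m (v : 'I_2 * 'I_m.+3) :
  [|| perm_eq [seq Llab v w | w <- nb v] tA, perm_eq [seq Llab v w | w <- nb v] tB
    | perm_eq [seq Llab v w | w <- nb v] tC].
Proof.
case: v => [i j]; have Hi := ltn_ord i; have Hj := ltn_ord j.
have [E0|N0] := eqVneq (j : nat) 0.
  have -> : nb (i, j) = [:: (flip2 i, j); (i, inord 1)] by rewrite /nb /= E0.
  rewrite /= Llab_vert Llab_hor inordK // E0 /=.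
  by case: i Hi => [[|[|]] ?].
have [E1|N1] := eqVneq (j : nat) m.+2.
  have -> : nb (i, j) = [:: (flip2 i, j); (i, inord m.+1)] by rewrite /nb /= E1 ltnn /=.
  rewrite /= Llab_vert Llab_hor inordK // E1 /=.
  rewrite eqxx ltnSn. by case: i Hi => [[|[|]] ?].
have -> : nb (i, j) = [:: (flip2 i, j); (i, inord j.-1); (i, inord j.+1)].
  rewrite /nb /=. have -> : 0 < j by lia. by have -> : j < m.+2 by lia.
rewrite /= Llab_vert !Llab_hor !inordK; try lia.
rewrite (negbTE N0) (negbTE N1) /=.
have -> : j.-1 < j by lia. have -> : j.+1 < j = false by lia.
by case: i Hi => [[|[|]] ?].
Qed.

Lemma in_seq_mset (s : seq cet) x : (x \in (seq_mset s : tile)) = (x \in s).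
Proof. by rewrite in_mset mset_seqE -has_count has_pred1. Qed.

Theorem proposition7 (n : nat) : 2 < n -> T1_eq (ladder n) 3.
Proof.
case: n => [|[|[|m]]] // _.
have dAB : seq_mset tA != seq_mset tB by apply/eqP => /eq_seq_msetP.
have dAC : seq_mset tA != seq_mset tC by apply/eqP => /eq_seq_msetP.
have dBC : seq_mset tB != seq_mset tC by apply/eqP => /eq_seq_msetP.
have mA : seq_mset tA \in (seq_mset tA |` (seq_mset tB |` [fset seq_mset tC]))%fset
  by exact: fset1U1.
have mB : seq_mset tB \in (seq_mset tA |` (seq_mset tB |` [fset seq_mset tC]))%fset
  by apply: fset1Ur; exact: fset1U1.
have mC : seq_mset tC \in (seq_mset tA |` (seq_mset tB |` [fset seq_mset tC]))%fset
  by apply: fset1Ur; apply: fset1Ur; exact: fset11.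
split.
- exists (seq_mset tA |` (seq_mset tB |` [fset seq_mset tC]))%fset.
  + split.
    * move=> t; rewrite !in_fset1U in_fset1 => /orP [/eqP -> | /orP [/eqP -> | /eqP ->]] x;
        rewrite in_seq_mset !in_cons in_nil ?orbF.
      -- move=> /orP [/eqP -> | /eqP ->]; exists (seq_mset tA); [exact: mA | by rewrite in_seq_mset | exact: mA | by rewrite in_seq_mset].
      -- move=> /orP [/eqP -> | /orP [/eqP -> | /eqP ->]].
         ++ exists (seq_mset tA); [exact: mA | by rewrite in_seq_mset].
         ++ exists (seq_mset tA); [exact: mA | by rewrite in_seq_mset].
         ++ exists (seq_mset tC); [exact: mC | by rewrite in_seq_mset].
      -- move=> /orP [/eqP -> | /orP [/eqP -> | /eqP ->]].
         ++ exists (seq_mset tA); [exact: mA | by rewrite in_seq_mset].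
         ++ exists (seq_mset tA); [exact: mA | by rewrite in_seq_mset].
         ++ exists (seq_mset tB); [exact: mB | by rewrite in_seq_mset].
    * exists (@lamL m.+3); split; first exact: lamL_ad.
      move=> v; rewrite tile_L.
      case/or3P: (tile_in v) => /eq_seq_msetP ->; [exact: mA | exact: mB | exact: mC].
  + rewrite /pot_size !cardfsU1 cardfs1 !in_fset1U in_fset1 negb_or.
    move: dAB dAC dBC; move: (seq_mset tA) (seq_mset tB) (seq_mset tC) => a b c ab ac bc.
    by rewrite in_fset1 ab ac (negbTE bc).
- move=> P _ [lam [Had HP]]; exact: lower Had HP.
Qed.
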